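(* Let $G=(V,E)$ be a finite connected directed graph with $(i,j)\in E$ if and only if $(j,i)\in E$, and write $\partial i=\{j\in V:(j,i)\in E\}$. Let $f=(f_{ij})_{(i,j)\in E}$ with each $f_{ij}:\mathbb{R}\to\mathbb{R}$ continuous and strictly increasing and $f_{ij}(x)=-f_{ji}(-x)$. Let $(\phi,\pi)$ and $(\phi^*,\pi^* )$, with $\phi,\phi^*:E\to\mathbb{R}$ skew-symmetric and $\pi,\pi^*:V\to\mathbb{R}$, satisfy $\sum_{j\in\partial i}\phi_{ji}+q_i=0$, $\sum_{j\in\partial i}\phi^*_{ji}+q^*_i=0$ for all $i\in V$, and $\pi_j-\pi_i=-f_{ij}(\phi_{ij})$, $\pi^*_j-\pi^*_i=-f_{ij}(\phi^*_{ij})$ for all $(i,j)\in E$, for productions $q,q^*:V\to\mathbb{R}$. Let $T\subset V$. If $\pi_t=\pi_t^*$ for all $t\in T$ and $q_i\ge q_i^*$ for all $i\in V\setminus T$, then $q_t\le q_t^*$ for all $t\in T$. *)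

(* Defs.v *)
From HB Require Import structures.
From mathcomp Require Import all_boot all_order all_algebra.
From mathcomp Require Import all_classical all_reals all_analysis.
Set Implicit Arguments. Unset Strict Implicit. Unset Printing Implicit Defensive.
Import Order.TTheory GRing.Theory Num.Theory.
Import numFieldNormedType.Exports.
Local Open Scope ring_scope.

Definition network_solution (R : realType) (V : finType) (E : rel V)
    (f : V -> V -> R -> R) (q : V -> R) (phi : V -> V -> R) (pi : V -> R) : Prop :=
  [/\ (forall i j, E i j -> phi i j = - phi j i),
      (forall i, \sum_(j | E j i) phi j i + q i = 0)
    & (forall i j, E i j -> pi j - pi i = - f i j (phi i j))].

(* Main.v *)
Require Import Defs.
From HB Require Import structures.
From mathcomp Require Import all_boot all_order all_algebra.
From mathcomp Require Import all_classical all_reals all_analysis.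
From mathcomp Require Import ring lra.
Import Order.TTheory GRing.Theory Num.Theory.
Import numFieldNormedType.Exports.
Local Open Scope ring_scope.

Lemma edge_out (V : finType) (E : rel V) (S : pred V) x y :
  connect E x y -> S x -> ~~ S y -> exists a b, [/\ S a, ~~ S b & E a b].
Proof.
move=> /connectP [p Hp ->]; elim: p x Hp => [|z p IH] x /=.
  by move=> _ ->.
move=> /andP [Exz Hp] Sx Sl.
case Sz: (S z); first exact: IH Hp Sz Sl.
by exists x, z; rewrite Sz.
Qed.

Lemma sum_neg (R : realType) (V : finType) (F : V -> V -> R) a b :
  (forall i j, F i j <= 0) -> F a b < 0 -> \sum_i \sum_j F i j < 0.
Proof.
move=> H Hab.
rewrite (bigD1 a) //= (bigD1 b) //=.
have H1 : \sum_(j | j != b) F a j <= 0 by apply: sumr_le0 => j _.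
have H2 : \sum_(i | i != a) \sum_j F i j <= 0.
  by apply: sumr_le0 => i _; apply: sumr_le0.
lra.
Qed.

Theorem corollary2 (R : realType) (V : finType) (E : rel V)
    (f : V -> V -> R -> R) (q qs : V -> R) (phi phis : V -> V -> R)
    (pi pis : V -> R) (T : {set V}) :
  (forall i j, E i j = E j i) ->
  (forall x y, connect E x y) ->
  (forall i j, E i j -> continuous (f i j)) ->
  (forall i j, E i j -> forall x y : R, x < y -> f i j x < f i j y) ->
  (forall i j, E i j -> forall x : R, f i j x = - f j i (- x)) ->
  network_solution E f q phi pi ->
  network_solution E f qs phis pis ->
  (forall t, t \in T -> pi t = pis t) ->
  (forall i, i \notin T -> qs i <= q i) ->
  forall t, t \in T -> q t <= qs t.
Proof.
move=> Esym Econ _ fmono _ [sk1 cons1 pot1] [sk2 cons2 pot2] piT qT t tT.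
pose d i := pi i - pis i.
pose G i j := if E i j then phi i j - phis i j else 0.
have Ganti i j : G i j = - G j i.
  rewrite /G Esym; case: ifP => Eji; last by rewrite oppr0.
  have Eij : E i j by rewrite Esym.
  rewrite (sk1 _ _ Eij) (sk2 _ _ Eij); lra.
have outq i : q i - qs i = \sum_j G i j.
  have h1 : q i = \sum_(j | E j i) phi i j.
    have := cons1 i; rewrite (eq_bigr (fun j => - phi i j)).
      by rewrite sumrN; lra.
    by move=> j Eji; rewrite (sk1 _ _ Eji).
  have h2 : qs i = \sum_(j | E j i) phis i j.
    have := cons2 i; rewrite (eq_bigr (fun j => - phis i j)).
      by rewrite sumrN; lra.
    by move=> j Eji; rewrite (sk2 _ _ Eji).
  rewrite h1 h2 -sumrB big_mkcond /=; apply: eq_bigr => j _.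
  by rewrite /G Esym.
have fval1 i j : E i j -> f i j (phi i j) = pi i - pi j.
  by move=> Eij; have := pot1 _ _ Eij; lra.
have fval2 i j : E i j -> f i j (phis i j) = pis i - pis j.
  by move=> Eij; have := pot2 _ _ Eij; lra.
have Gle i j : d i <= d j -> G i j <= 0.
  rewrite /G; case: ifP => // Eij Hd.
  rewrite subr_le0 leNgt; apply/negP => Hlt.
  have := fmono _ _ Eij _ _ Hlt; rewrite fval1 // fval2 // => H.
  move: Hd; rewrite /d; lra.
have Glt i j : E i j -> d i < d j -> G i j < 0.
  rewrite /G => Eij; rewrite Eij => Hd.
  rewrite subr_lt0 ltNge; apply/negP; rewrite le_eqVlt => /orP [/eqP He|Hlt].
    have := fval1 _ _ Eij; rewrite -He fval2 // => H.
    move: Hd; rewrite /d; lra.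
  have := fmono _ _ Eij _ _ Hlt; rewrite fval1 // fval2 // => H.
  move: Hd; rewrite /d; lra.
have ident (w : V -> R) :
    (\sum_i w i * (q i - qs i)) *+ 2 = \sum_i \sum_j (w i - w j) * G i j.
  have e1 : \sum_i w i * (q i - qs i) = \sum_i \sum_j w i * G i j.
    by apply: eq_bigr => i _; rewrite outq mulr_sumr.
  have e2 : \sum_i \sum_j w j * G i j = - \sum_i \sum_j w i * G i j.
    rewrite exchange_big /= -sumrN; apply: eq_bigr => i _.
    rewrite -sumrN; apply: eq_bigr => j _; rewrite (Ganti j i); lra.
  have e3 : \sum_i \sum_j (w i - w j) * G i j
      = \sum_i \sum_j w i * G i j - \sum_i \sum_j w j * G i j.
    rewrite -sumrB; apply: eq_bigr => i _.
    by rewrite -sumrB; apply: eq_bigr => j _; rewrite mulrBl.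
  rewrite mulr2n e1 e3 e2; lra.
have dge0 : forall i, 0 <= d i.
  case: (@arg_minP _ R V t predT d isT) => x _ Hx.
  suff : 0 <= d x by move=> H i; apply: le_trans H (Hx i isT).
  rewrite leNgt; apply/negP => dxlt.
  pose S := fun i => d i == d x.
  have St : ~~ S t.
    rewrite /S; apply/negP => /eqP H; move: dxlt H; rewrite /d (piT t tT) => h1 h2; lra.
  have [a [b [Sa Sb Eab]]] := @edge_out V E S x t (Econ x t) (eqxx (d x)) St.
  pose w i : R := if S i then 1 else 0.
  have Hl : 0 <= (\sum_i w i * (q i - qs i)) *+ 2.
    rewrite mulrn_wge0 // sumr_ge0 // => i _; rewrite /w.
    case: ifP => Si; last by rewrite mul0r.
    rewrite mul1r subr_ge0; apply: qT; apply/negP => iT.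
    move: Si; rewrite /S => /eqP; move: dxlt; rewrite /d (piT i iT) => h1 h2; lra.
  have Hr : \sum_i \sum_j (w i - w j) * G i j < 0.
    apply: (@sum_neg R V _ a b).
      move=> i j; rewrite /w.
      case Si: (S i); case Sj: (S j); rewrite ?subrr ?mul0r //.
      - rewrite subr0 mul1r; apply: Gle.
        by move: Si => /eqP ->; apply: Hx.
      - rewrite sub0r mulN1r Ganti opprK; apply: Gle.
        by move: Sj => /eqP ->; apply: Hx.
    rewrite /w Sa (negbTE Sb) subr0 mul1r; apply: Glt => //.
    move: Sa => /eqP ->; rewrite lt_neqAle Hx // andbT.
    by move: Sb; rewrite /S eq_sym.
  by move: Hl; rewrite ident leNgt Hr.
rewrite -subr_le0 outq; apply: sumr_le0 => j _; apply: Gle.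
by have := dge0 j; rewrite /d (piT t tT) subrr.
Qed.
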